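(* Let $G\ge 2$ and $p_t\in[0,1]$. Let $r_{t,1},\dots,r_{t,G}\in\{0,1\}$ be the rewards of a group, $R=\sum_j r_{t,j}$, $\hat p_t=R/G$, $\hat A_{t,i}=r_{t,i}-\hat p_t$, $A_{t,i}=r_{t,i}-p_t$, and $\mathcal S=\{1\le R\le G-1\}$. Then on the event $\mathcal S$, for every $i\in[G]$: $\hat A_{t,i}<A_{t,i}$ surely if $p_t<1/G$, and $\hat A_{t,i}>A_{t,i}$ surely if $p_t>(G-1)/G$.
   Context: $p_t$ is the expected reward of the policy on the prompt; $\hat p_t$ is the group baseline, $\hat A_{t,i}$ the group-relative advantage, $A_{t,i}$ the expected advantage, and $\mathcal S$ the event that the group is neither all-correct nor all-incorrect. *)

(* Defs.v *)
From mathcomp Require Import all_boot all_order all_algebra.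
Set Implicit Arguments. Unset Strict Implicit. Unset Printing Implicit Defensive.
Import Order.TTheory GRing.Theory Num.Theory.
Local Open Scope ring_scope.

Definition group_count (G : nat) (r : 'I_G -> bool) : nat :=
  (\sum_(j < G) (r j : nat))%N.

Definition phat {F : realFieldType} (G : nat) (r : 'I_G -> bool) : F :=
  (group_count r)%:R / G%:R.

Definition Ahat {F : realFieldType} (G : nat) (r : 'I_G -> bool) (i : 'I_G) : F :=
  (r i)%:R - phat r.

Definition Aexp {F : realFieldType} (G : nat) (p : F) (r : 'I_G -> bool) (i : 'I_G) : F :=
  (r i)%:R - p.

Definition eventS (G : nat) (r : 'I_G -> bool) : bool :=
  (1 <= group_count r <= G.-1)%N.

(* Main.v *)
Require Import Defs.
From mathcomp Require Import all_boot all_order all_algebra.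
Import Order.TTheory GRing.Theory Num.Theory.
Local Open Scope ring_scope.

Theorem corollary3 (F : realFieldType) (G : nat) (p : F) :
  (2 <= G)%N -> 0 <= p <= 1 ->
  forall (r : 'I_G -> bool), eventS r ->
  forall i : 'I_G,
    (p < 1 / G%:R -> Ahat r i < Aexp p r i) /\
    (p > (G%:R - 1) / G%:R -> Ahat r i > Aexp p r i).
Proof.
move=> HG _ r /andP[H1 H2] i.
rewrite /Ahat /Aexp /phat.
set k := group_count r in H1 H2 *.
have Gp : (0 : F) < G%:R by rewrite ltr0n (leq_trans _ HG).
have Gi : (0 : F) < G%:R^-1 by rewrite invr_gt0.
split=> Hp.
rewrite ltrD2l ltrN2.
  apply: (lt_le_trans Hp).
  rewrite mul1r -[X in X <= _]mul1r; apply: ler_wpM2r; first exact: ltW.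
  by rewrite ler1n.
- rewrite ltrD2l ltrN2.
  apply: le_lt_trans Hp.
  apply: ler_wpM2r; first exact: ltW.
  have -> : (G%:R - 1 : F) = (G.-1)%:R.
    by case: (G) HG => // n _; rewrite -natr1 /= addrK.
  by rewrite ler_nat.
Qed.
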